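(* Let $g\ge2$ be an integer and let $k,d_1,d_2,d_3,\ell,m,n$ be positive integers with $1\le d_1,d_2,d_3\le g-1$, $\ell\le m\le n$ and $n\ge 2$, satisfying $$L_k=d_1\frac{g^\ell-1}{g-1}\cdot d_2\frac{g^m-1}{g-1}\cdot d_3\frac{g^n-1}{g-1}.$$ Then $$k<3n\frac{\log g}{\log\alpha}+1<10n\log g,$$ where $\alpha=(1+\sqrt5)/2$.
   Context: $(L_n)_{n\ge 0}$ is the Lucas sequence: $L_0=2$, $L_1=1$, $L_{n+2}=L_{n+1}+L_n$. $\log$ is the natural logarithm. *)

(* Defs.v *)
From Stdlib Require Import Reals Lra Lia.
Open Scope R_scope.

Fixpoint lucas (n : nat) : nat :=
  match n with
  | O => 2%nat
  | S p => match p with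
           | O => 1%nat
           | S q => (lucas p + lucas q)%nat
           end
  end.

Definition alpha : R := (1 + sqrt 5) / 2.

(* Main.v *)
Require Import Defs.
From Stdlib Require Import Reals Lra Lia Psatz.
Open Scope R_scope.

Lemma ln_le : forall x y, 0 < x -> x <= y -> ln x <= ln y.
Proof.
  intros x y Hx Hxy. destruct (Rle_lt_or_eq_dec _ _ Hxy) as [H|H].
  - left. apply ln_increasing; assumption.
  - rewrite H. right. reflexivity.
Qed.

Lemma alpha_sq : alpha * alpha = alpha + 1.
Proof.
  unfold alpha. assert (H := sqrt_sqrt 5 ltac:(lra)). nra.
Qed.

Lemma alpha_bounds : 1.6 < alpha < 2.
Proof.
  unfold alpha. assert (H := sqrt_sqrt 5 ltac:(lra)).
  assert (0 <= sqrt 5) by apply sqrt_pos. nra.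
Qed.

Lemma lucas_lb_aux : forall k, alpha ^ k <= INR (lucas (S k)) /\ alpha ^ (S k) <= INR (lucas (S (S k))).
Proof.
  induction k as [|k [IH1 IH2]].
  - simpl. pose proof alpha_bounds. lra.
  - split; [exact IH2|].
    change (lucas (S (S (S k)))) with (lucas (S (S k)) + lucas (S k))%nat.
    rewrite plus_INR.
    replace (alpha ^ S (S k)) with (alpha ^ S k + alpha ^ k).
    + lra.
    + simpl. pose proof alpha_sq. replace (alpha * (alpha * alpha ^ k)) with ((alpha*alpha) * alpha ^ k) by ring.
      rewrite H. ring.
Qed.

Theorem lemma4p1 (g k d1 d2 d3 l m n : nat) :
  (2 <= g)%nat ->
  (1 <= k)%nat -> (1 <= l)%nat ->
  (1 <= d1 <= g - 1)%nat -> (1 <= d2 <= g - 1)%nat -> (1 <= d3 <= g - 1)%nat ->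
  (l <= m)%nat -> (m <= n)%nat -> (2 <= n)%nat ->
  INR (lucas k) =
    (INR d1 * ((INR g ^ l - 1) / (INR g - 1))) *
    (INR d2 * ((INR g ^ m - 1) / (INR g - 1))) *
    (INR d3 * ((INR g ^ n - 1) / (INR g - 1))) ->
  INR k < 3 * INR n * (ln (INR g) / ln alpha) + 1 /\
  3 * INR n * (ln (INR g) / ln alpha) + 1 < 10 * INR n * ln (INR g).
Proof.
  intros Hg Hk Hl [Hd1a Hd1b] [Hd2a Hd2b] [Hd3a Hd3b] Hlm Hmn Hn Heq.
  set (a := INR g) in *.
  assert (Ha : 2 <= a) by (unfold a; apply (le_INR 2); lia).
  assert (Hlna : 0 < ln alpha) by (rewrite <- ln_1; apply ln_increasing; pose proof alpha_bounds; lra).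
  assert (Hln2 : / 2 < ln 2) by apply ln_lt_2.
  assert (Hlng : ln 2 <= ln a) by (apply ln_le; lra).
  assert (HnR : 2 <= INR n) by (apply (le_INR 2); lia).
  assert (Hlnal3 : 1 < 3 * ln alpha).
  { assert (ln 4 <= ln (alpha ^ 3)).
    { apply ln_le; [lra|]. pose proof alpha_bounds. simpl. nra. }
    rewrite ln_pow in H by (pose proof alpha_bounds; lra).
    replace 4 with (2*2) in H by ring. rewrite ln_mult in H by lra. simpl in H. lra. }
  assert (Hf : forall d j : nat, (1 <= d <= g - 1)%nat -> (1 <= j <= n)%nat ->
            0 < INR d * ((a ^ j - 1) / (a - 1)) < a ^ n).
  { intros d j [Hda Hdb] [Hj1 Hj2].
    assert (HdR : 1 <= INR d) by (apply (le_INR 1); lia).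
    assert (HdR2 : INR d <= a - 1).
    { unfold a. replace (INR g - 1) with (INR g - INR 1) by (simpl; ring).
      rewrite <- (minus_INR g 1) by lia. apply le_INR; lia. }
    assert (Hpj : a ^ 1 <= a ^ j) by (apply Rle_pow; lia || lra).
    assert (Hpn : a ^ j <= a ^ n) by (apply Rle_pow; lia || lra).
    simpl in Hpj.
    split.
    - apply Rmult_lt_0_compat; [lra|]. apply Rdiv_lt_0_compat; lra.
    - apply Rle_lt_trans with (a ^ j - 1); [|lra].
      unfold Rdiv. rewrite Rmult_comm, Rmult_assoc.
      apply Rle_trans with ((a ^ j - 1) * 1); [|lra].
      apply Rmult_le_compat_l; [lra|].
      rewrite Rmult_comm. apply Rle_trans with ((a - 1) * / (a - 1)).
      + apply Rmult_le_compat_r; [apply Rlt_le, Rinv_0_lt_compat; lra| lra].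
      + rewrite Rinv_r; lra. }
  destruct (Hf d1 l) as [A1 B1]; [lia|lia|].
  destruct (Hf d2 m) as [A2 B2]; [lia|lia|].
  destruct (Hf d3 n) as [A3 B3]; [lia|lia|].
  set (G := a ^ n) in *.
  assert (HL : INR (lucas k) < G ^ 3).
  { rewrite Heq. simpl.
    set (x := INR d1 * ((a ^ l - 1) / (a - 1))) in *.
    set (y := INR d2 * ((a ^ m - 1) / (a - 1))) in *.
    set (z := INR d3 * ((a ^ n - 1) / (a - 1))) in *.
    assert (x*y < G*G) by nra. nra. }
  destruct (lucas_lb_aux (k - 1)) as [Hlb _].
  replace (S (k - 1)) with k in Hlb by lia.
  assert (Hpow : alpha ^ (k - 1) < G ^ 3) by lra.
  assert (Hal0 : 0 < alpha) by (pose proof alpha_bounds; lra).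
  apply ln_increasing in Hpow; [|apply pow_lt; lra].
  rewrite !ln_pow in Hpow by (unfold G; try apply pow_lt; lra).
  unfold G in Hpow. rewrite ln_pow in Hpow by lra.
  rewrite minus_INR in Hpow by lia. simpl in Hpow.
  split.
  - assert (INR k - 1 < 3 * INR n * ln a / ln alpha).
    { apply Rmult_lt_reg_r with (ln alpha); [lra|].
      unfold Rdiv. rewrite Rmult_assoc, Rinv_l by lra. lra. }
    unfold Rdiv in *. lra.
  - assert (3 * INR n * (ln a / ln alpha) < 9 * INR n * ln a).
    { unfold Rdiv. 
      assert (3 * / ln alpha < 9).
      { apply Rmult_lt_reg_r with (ln alpha); [lra|].
        rewrite Rmult_assoc, Rinv_l by lra. lra. }
      assert (0 < INR n * ln a) by nra. nra. }
    nra.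
Qed.
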